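(* Let $|\psi\rangle,|\phi\rangle,|e\rangle,|f\rangle$ be unit vectors in $\mathbb{C}^2$ with $\langle e|f\rangle=0$. Then for every $\mathcal{X}\in\{\mathcal{R},\mathcal{UE},\mathcal{GE},\mathcal{C}\}$, $$\max_{\Psi\in\mathcal{X}}\left\{\frac12\langle e|\Psi(|\psi\rangle\langle\psi|)|e\rangle+\frac12\langle f|\Psi(|\phi\rangle\langle\phi|)|f\rangle\right\}=\frac12\left(1+\sqrt{1-|\langle\psi|\phi\rangle|^2}\right).$$
   Context: Channels are linear, completely positive, trace preserving maps on $\mathcal{L}(\mathbb{C}^2)$. $\mathcal{C}$ is the set of all quantum channels; $\mathcal{R}$ is the set of random unitary channels $A\mapsto\sum_xp_xU_xAU_x^\dagger$ ($\{p_x\}$ a finite probability distribution, $U_x$ unitary); $\mathcal{GE}$ is the set of entanglement breaking channels (those $\Psi$ with $(\mathrm{id}\otimes\Psi)(\rho)$ separable for every state $\rho$ on $\mathbb{C}^2\otimes\mathbb{C}^2$); $\mathcal{UE}$ is the set of unital ($\Psi(I)=I$) entanglement breaking channels. *)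

(* Defs.v *)
From HB Require Import structures.
From mathcomp Require Import all_boot all_order all_algebra.
From mathcomp Require Import complex.
From mathcomp Require Import reals.
Set Implicit Arguments. Unset Strict Implicit. Unset Printing Implicit Defensive.
Import Order.TTheory GRing.Theory Num.Theory.
Local Open Scope ring_scope.

Section QubitChannels.
Variable R : realType.
Local Notation C := R[i].
Local Notation M2 := 'M[C]_2.

Definition adj m n (A : 'M[C]_(m, n)) : 'M[C]_(n, m) := (map_mx Num.conj A)^T.

Definition inner (x y : 'cV[C]_2) : C := (adj x *m y) 0 0.

Definition ketbra (x : 'cV[C]_2) : M2 := x *m adj x.

Definition unit_vector (x : 'cV[C]_2) : Prop := inner x x = 1.

(* positive semidefinite 2x2 matrix (0 <= z in C means z real and >= 0) *)
Definition psd (A : M2) : Prop := forall v : 'cV[C]_2, 0 <= inner v (A *m v).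

Definition is_state (A : M2) : Prop := psd A /\ \tr A = 1.

(* An operator X on C^n (x) C^2 is represented by its n x n array of 2x2 blocks
   X i j; it is positive semidefinite iff sum_{i,j} <v_i| X_ij |v_j> >= 0
   for all vectors v = (v_i)_i in C^n (x) C^2. *)
Definition block_psd (n : nat) (B : 'I_n -> 'I_n -> M2) : Prop :=
  forall v : 'I_n -> 'cV[C]_2, 0 <= \sum_(i < n) \sum_(j < n) inner (v i) (B i j *m v j).

(* id_n (x) Psi, acting blockwise *)
Definition ampl (n : nat) (Psi : M2 -> M2) (B : 'I_n -> 'I_n -> M2) :=
  fun i j => Psi (B i j).

Definition is_linear_map (Psi : M2 -> M2) : Prop :=
  forall (a : C) (X Y : M2), Psi (a *: X + Y) = a *: Psi X + Psi Y.

Definition completely_positive (Psi : M2 -> M2) : Prop :=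
  forall (n : nat) (B : 'I_n -> 'I_n -> M2), block_psd B -> block_psd (ampl Psi B).

Definition trace_preserving (Psi : M2 -> M2) : Prop := forall X, \tr (Psi X) = \tr X.

Definition is_channel (Psi : M2 -> M2) : Prop :=
  [/\ is_linear_map Psi, completely_positive Psi & trace_preserving Psi].

Definition unitary (U : M2) : Prop := U *m adj U = 1%:M.

Definition is_random_unitary (Psi : M2 -> M2) : Prop :=
  exists (K : nat) (p : 'I_K -> C) (U : 'I_K -> M2),
    [/\ forall k, 0 <= p k, \sum_(k < K) p k = 1, forall k, unitary (U k)
      & forall A, Psi A = \sum_(k < K) p k *: (U k *m A *m adj (U k))].

Definition is_state2 (B : 'I_2 -> 'I_2 -> M2) : Prop :=
  block_psd B /\ \sum_(i < 2) \tr (B i i) = 1.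

(* separable: a finite convex combination of product states sigma (x) tau,
   whose (i,j) block is sigma i j *: tau *)
Definition separable2 (B : 'I_2 -> 'I_2 -> M2) : Prop :=
  exists (K : nat) (p : 'I_K -> C) (s t : 'I_K -> M2),
    [/\ forall k, 0 <= p k, \sum_(k < K) p k = 1,
        forall k, is_state (s k), forall k, is_state (t k)
      & forall i j, B i j = \sum_(k < K) (p k * s k i j) *: t k].

Definition is_entanglement_breaking (Psi : M2 -> M2) : Prop :=
  is_channel Psi /\ forall B, is_state2 B -> separable2 (ampl Psi B).

Definition is_unital (Psi : M2 -> M2) : Prop := Psi 1%:M = 1%:M.

Definition is_unital_entanglement_breaking (Psi : M2 -> M2) : Prop :=
  is_entanglement_breaking Psi /\ is_unital Psi.

Definition success (psi phi e f : 'cV[C]_2) (Psi : M2 -> M2) : C :=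
  2^-1 * inner e (Psi (ketbra psi) *m e) + 2^-1 * inner f (Psi (ketbra phi) *m f).

End QubitChannels.

(* Main.v *)
Require Import Defs.
From HB Require Import structures.
From mathcomp Require Import all_boot all_order all_algebra.
From mathcomp Require Import complex.
From mathcomp Require Import reals.
From mathcomp Require Import ring.
Set Implicit Arguments. Unset Strict Implicit. Unset Printing Implicit Defensive.
Import Order.TTheory GRing.Theory Num.Theory.
Local Open Scope ring_scope.

Lemma hadjE {R : realType} m n (A : 'M[R[i]]_(m, n)) i j : adj A i j = (A j i)^*.
Proof. by rewrite /adj !mxE. Qed.

Lemma hadjK {R : realType} m n (A : 'M[R[i]]_(m, n)) : adj (adj A) = A.
Proof. by apply/matrixP=> i j; rewrite !hadjE conjCK. Qed.

Lemma hadjD {R : realType} m n (A B : 'M[R[i]]_(m, n)) : adj (A + B) = adj A + adj B.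
Proof. by apply/matrixP=> i j; rewrite !hadjE !mxE rmorphD. Qed.

Lemma hadjN {R : realType} m n (A : 'M[R[i]]_(m, n)) : adj (- A) = - adj A.
Proof. by apply/matrixP=> i j; rewrite !hadjE !mxE rmorphN. Qed.

Lemma hadjZ {R : realType} m n (a : R[i]) (A : 'M[R[i]]_(m, n)) : adj (a *: A) = a^* *: adj A.
Proof. by apply/matrixP=> i j; rewrite !hadjE !mxE rmorphM. Qed.

Lemma hadjM {R : realType} m n p (A : 'M[R[i]]_(m, n)) (B : 'M[R[i]]_(n, p)) :
  adj (A *m B) = adj B *m adj A.
Proof.
apply/matrixP=> i j; rewrite !hadjE !mxE rmorph_sum; apply: eq_bigr => k _.
by rewrite !hadjE rmorphM mulrC.
Qed.

Lemma hadj1 {R : realType} n : adj (1%:M : 'M[R[i]]_n) = 1%:M.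
Proof. by apply/matrixP=> i j; rewrite !hadjE !mxE conjC_nat eq_sym. Qed.

Lemma innerE {R : realType} (x y : 'cV[R[i]]_2) : inner x y = \sum_(k < 2) (x k 0)^* * y k 0.
Proof. by rewrite /inner mxE; apply: eq_bigr => k _; rewrite hadjE. Qed.

Lemma inner_conj {R : realType} (x y : 'cV[R[i]]_2) : inner y x = (inner x y)^*.
Proof. rewrite !innerE rmorph_sum; apply: eq_bigr => k _; by rewrite rmorphM /= conjCK mulrC. Qed.

Lemma innerDr {R : realType} (x y z : 'cV[R[i]]_2) : inner x (y + z) = inner x y + inner x z.
Proof. by rewrite /inner mulmxDr mxE. Qed.

Lemma innerZr {R : realType} (a : R[i]) (x y : 'cV[R[i]]_2) : inner x (a *: y) = a * inner x y.
Proof. by rewrite /inner -scalemxAr mxE. Qed.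

Lemma innerNr {R : realType} (x y : 'cV[R[i]]_2) : inner x (- y) = - inner x y.
Proof. by rewrite -scaleN1r innerZr mulN1r. Qed.

Lemma innerBr {R : realType} (x y z : 'cV[R[i]]_2) : inner x (y - z) = inner x y - inner x z.
Proof. by rewrite innerDr innerNr. Qed.

Lemma innerDl {R : realType} (x y z : 'cV[R[i]]_2) : inner (y + z) x = inner y x + inner z x.
Proof. by rewrite /inner hadjD mulmxDl mxE. Qed.

Lemma innerZl {R : realType} (a : R[i]) (x y : 'cV[R[i]]_2) : inner (a *: y) x = a^* * inner y x.
Proof. by rewrite /inner hadjZ -scalemxAl mxE. Qed.

Lemma innerNl {R : realType} (x y : 'cV[R[i]]_2) : inner (- y) x = - inner y x.
Proof. by rewrite -scaleN1r innerZl rmorphN1 mulN1r. Qed.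

Lemma innerBl {R : realType} (x y z : 'cV[R[i]]_2) : inner (y - z) x = inner y x - inner z x.
Proof. by rewrite innerDl innerNl. Qed.

Lemma inner_mulmx {R : realType} (A : 'M[R[i]]_2) (x y : 'cV[R[i]]_2) :
  inner x (A *m y) = inner (adj A *m x) y.
Proof. by rewrite /inner hadjM hadjK mulmxA. Qed.

Lemma mx11E {R : realType} (M : 'M[R[i]]_1) : M = (M 0 0)%:M.
Proof. exact: mx11_scalar. Qed.

Lemma adj_mul_inner {R : realType} (x y : 'cV[R[i]]_2) : adj x *m y = (inner x y)%:M.
Proof. by rewrite {1}[adj x *m y]mx11E. Qed.

Lemma ketbra_mul {R : realType} (x y : 'cV[R[i]]_2) : ketbra x *m y = inner x y *: x.
Proof. by rewrite /ketbra -mulmxA adj_mul_inner mul_mx_scalar. Qed.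

Lemma outer4 {R : realType} (x y z w : 'cV[R[i]]_2) (A : 'M[R[i]]_2) :
  x *m adj y *m A *m z *m adj w = inner y (A *m z) *: (x *m adj w).
Proof.
have -> : x *m adj y *m A *m z *m adj w = x *m (adj y *m (A *m z)) *m adj w by rewrite !mulmxA.
by rewrite adj_mul_inner mul_mx_scalar scalemxAl.
Qed.

Lemma inner_ketbra {R : realType} (u x w : 'cV[R[i]]_2) :
  inner u (ketbra x *m w) = inner u x * inner x w.
Proof. by rewrite ketbra_mul innerZr mulrC. Qed.

Lemma tr_outer {R : realType} (x y : 'cV[R[i]]_2) : \tr (x *m adj y) = inner y x.
Proof. by rewrite mxtrace_mulC adj_mul_inner /mxtrace big_ord1 mxE. Qed.

Lemma inner_ge0 {R : realType} (x : 'cV[R[i]]_2) : 0 <= inner x x.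
Proof. by rewrite innerE; apply: sumr_ge0 => k _; rewrite mulrC mul_conjC_ge0. Qed.

Lemma inner_eq0 {R : realType} (x : 'cV[R[i]]_2) : inner x x = 0 -> x = 0.
Proof.
rewrite innerE big_ord_recr big_ord1 /= => /eqP.
rewrite paddr_eq0 ?[_ * x _ _]mulrC ?mul_conjC_ge0 // !mul_conjC_eq0 => /andP[/eqP h0 /eqP h1].
apply/matrixP=> i j; rewrite (ord1 j) mxE; case: i => [[|[|//]] Hi].
  by rewrite -h0; congr (x _ _); apply: val_inj.
by rewrite -h1; congr (x _ _); apply: val_inj.
Qed.
Lemma mx0_scalar {R : realType} n : (0 : R[i])%:M = 0 :> 'M_n.
Proof. by apply/matrixP=> i j; rewrite !mxE mul0rn. Qed.

Lemma complete {R : realType} (a b : 'cV[R[i]]_2) :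
  inner a a = 1 -> inner b b = 1 -> inner a b = 0 -> ketbra a + ketbra b = 1%:M.
Proof.
move=> ha hb hab.
pose M : 'M[R[i]]_(2, 1 + 1) := row_mx a b.
have hadjM : adj M = col_mx (adj a) (adj b) by rewrite /adj map_row_mx tr_row_mx.
have h1 : adj M *m M = 1%:M.
  rewrite hadjM mul_col_row !adj_mul_inner ha hb hab inner_conj hab conjC0 mx0_scalar.
  by rewrite -scalar_mx_block.
have h2 := mulmx1C h1.
by rewrite -h2 hadjM mul_row_col.
Qed.

Lemma trace_basis {R : realType} (a b : 'cV[R[i]]_2) (Y : 'M[R[i]]_2) :
  inner a a = 1 -> inner b b = 1 -> inner a b = 0 ->
  \tr Y = inner a (Y *m a) + inner b (Y *m b).
Proof.
move=> ha hb hab.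
have -> : \tr Y = \tr (Y *m (ketbra a + ketbra b)) by rewrite complete // mulmx1.
by rewrite mulmxDr mxtraceD /ketbra !mulmxA !tr_outer.
Qed.

Lemma lincomb {R : realType} (x y u v k : R[i]) : u = v -> x - y = k * (u - v) -> x = y.
Proof. by move=> -> ; rewrite subrr mulr0 => /eqP; rewrite subr_eq0 => /eqP. Qed.

Lemma cs_facts {R : realType} (psi phi : 'cV[R[i]]_2) :
  inner psi psi = 1 -> inner phi phi = 1 ->
  let c := inner psi phi in
  inner (phi - c *: psi) (phi - c *: psi) = 1 - `|c| ^+ 2.
Proof.
move=> hp hf c.
rewrite normCK innerBl !innerBr !innerZl !innerZr hp hf -/c (inner_conj psi phi) -/c.
ring.
Qed.

Lemma spectral {R : realType} (psi phi e f : 'cV[R[i]]_2) :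
  inner psi psi = 1 -> inner phi phi = 1 ->
  inner e e = 1 -> inner f f = 1 -> inner e f = 0 ->
  let s := sqrtc (1 - `|inner psi phi| ^+ 2) in
  exists a b : 'cV[R[i]]_2, [/\ inner a a = 1, inner b b = 1, inner a b = 0 &
     ketbra psi - ketbra phi = s *: (ketbra a - ketbra b)].
Proof.
move=> hp hf he hf' hef s.
set c := inner psi phi.
have hcs := cs_facts hp hf; rewrite -/c in hcs.
have h0 : 0 <= 1 - `|c| ^+ 2 by rewrite -hcs inner_ge0.
have s_ge0 : 0 <= s by rewrite sqrtc_ge0.
have s2 : s ^+ 2 = 1 - c * c^* by rewrite sqr_sqrtc normCK.
have sJ : s^* = s by rewrite geC0_conj.
have cc : c * c^* = 1 - s ^+ 2 by rewrite s2; ring.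
have cpf : inner phi psi = c^* by rewrite inner_conj.
have hc : inner psi phi = c by [].
clearbody s c.
have [s0|s0] := eqVneq s 0.
  exists e, f; split => //.
  have hw : phi - c *: psi = 0.
    by apply: inner_eq0; rewrite hcs normCK -s2 s0 expr0n.
  have -> : phi = c *: psi by apply/eqP; rewrite -subr_eq0 hw.
  rewrite /ketbra hadjZ -scalemxAl -scalemxAr scalerA cc s0 expr0n subr0 scale1r subrr.
  by rewrite scale0r.
have s1J : (1 + s)^* = 1 + s by rewrite geC0_conj // addr_ge0.
pose a' := (1 + s) *: psi - c^* *: phi.
pose b' := c *: psi - (1 + s) *: phi.
pose N := 2 * s ^+ 2 * (1 + s).
have haa : inner a' a' = N.
  rewrite /a' innerBl !innerBr !innerZl !innerZr hp hf cpf hc s1J conjCK.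
  apply: (lincomb (k := - (1 + 2 * s)) cc); rewrite /N; ring.
have hbb : inner b' b' = N.
  rewrite /b' innerBl !innerBr !innerZl !innerZr hp hf cpf hc s1J.
  apply: (lincomb (k := - (1 + 2 * s)) cc); rewrite /N; ring.
have hab : inner a' b' = 0.
  rewrite /a' /b' innerBl !innerBr !innerZl !innerZr hp hf cpf hc s1J conjCK.
  apply: (lincomb (k := - c) cc); ring.
pose D := ketbra psi - ketbra phi.
have hDdef : ketbra psi - ketbra phi = D by [].
have hDa : D *m a' = s *: a'.
  rewrite /D mulmxBl !ketbra_mul /a' !innerBr !innerZr hp hf cpf hc scalerBr !scalerA.
  congr (_ *: _ - _ *: _); last by ring.
  by apply: (lincomb (k := -1) cc); ring.
have hDb : D *m b' = - s *: b'.
  rewrite /D mulmxBl !ketbra_mul /b' !innerBr !innerZr hp hf cpf hc scalerBr !scalerA.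
  congr (_ *: _ - _ *: _); first by ring.
  by apply: (lincomb (k := 1) cc); ring.
clearbody D a' b'.
have s_gt0 : 0 < s by rewrite lt_def s0.
have s1_gt0 : 0 < 1 + s by rewrite ltr_pwDl.
have N_gt0 : 0 < N by rewrite /N !mulr_gt0 ?exprn_gt0 ?ltr0n.
pose r := sqrtc N.
have hr2 : r ^+ 2 = N by rewrite sqr_sqrtc.
have r_ge0 : 0 <= r by rewrite sqrtc_ge0 ltW.
have r0 : r != 0 by rewrite sqrtc_eq0 gt_eqF.
pose k := r^-1.
have kJ : k^* = k by rewrite geC0_conj // invr_ge0.
have kkN : k^* * (k * N) = 1.
  by rewrite kJ /k -hr2 mulrA -expr2 -exprMn mulVf // expr1n.
clearbody k r N.
pose a := k *: a'. pose b := k *: b'.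
have ha : inner a a = 1 by rewrite /a innerZl innerZr haa kkN.
have hb : inner b b = 1 by rewrite /b innerZl innerZr hbb kkN.
have hab2 : inner a b = 0 by rewrite /a /b innerZl innerZr hab mulr0 mulr0.
have hDa2 : D *m a = s *: a by rewrite /a -(scalemxAr k D a') hDa !scalerA mulrC.
have hDb2 : D *m b = - s *: b by rewrite /b -(scalemxAr k D b') hDb !scalerA mulrC.
clearbody a b.
exists a, b; split => //.
have -> : ketbra psi - ketbra phi = D *m (ketbra a + ketbra b).
  by rewrite complete // mulmx1.
rewrite mulmxDr /ketbra !mulmxA hDa2 hDb2 -!scalemxAl.
by rewrite scalerBr scaleNr.
Qed.

Lemma lin0 {R : realType} (Psi : 'M[R[i]]_2 -> 'M[R[i]]_2) : is_linear_map Psi -> Psi 0 = 0.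
Proof.
move=> lin; have := lin 1 0 0; rewrite !scale1r addr0 => h.
by apply/esym/(addrI (Psi 0)); rewrite addr0 -h.
Qed.

Lemma linZ {R : realType} (Psi : 'M[R[i]]_2 -> 'M[R[i]]_2) a X :
  is_linear_map Psi -> Psi (a *: X) = a *: Psi X.
Proof. by move=> lin; have := lin a X 0; rewrite (lin0 lin) !addr0. Qed.

Lemma linB {R : realType} (Psi : 'M[R[i]]_2 -> 'M[R[i]]_2) X Y :
  is_linear_map Psi -> Psi (X - Y) = Psi X - Psi Y.
Proof. by move=> lin; have := lin (-1) Y X; rewrite !scaleN1r addrC => ->; rewrite addrC. Qed.

Lemma ketbra_psd {R : realType} (a : 'cV[R[i]]_2) : psd (ketbra a).
Proof. by move=> v; rewrite inner_ketbra (inner_conj v a) mul_conjC_ge0. Qed.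

Lemma upper {R : realType} (Psi : 'M[R[i]]_2 -> 'M[R[i]]_2) (psi phi e f : 'cV[R[i]]_2) :
  is_linear_map Psi -> (forall A, psd A -> psd (Psi A)) -> trace_preserving Psi ->
  inner psi psi = 1 -> inner phi phi = 1 ->
  inner e e = 1 -> inner f f = 1 -> inner e f = 0 ->
  success psi phi e f Psi <= 2^-1 * (1 + sqrtc (1 - `|inner psi phi| ^+ 2)).
Proof.
move=> lin pos tp hp hf he hf' hef.
have [a [b [ha hb hab hD]]] := spectral hp hf he hf' hef.
set s := sqrtc _ in hD *.
have s_ge0 : 0 <= s.
  by rewrite sqrtc_ge0 -(cs_facts hp hf) inner_ge0.
clearbody s.
have trb Y := trace_basis Y he hf' hef.
have tr1 x : inner x x = 1 -> \tr (Psi (ketbra x)) = 1 by move=> hx; rewrite tp tr_outer.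
have hf2 : inner f (Psi (ketbra phi) *m f) = 1 - inner e (Psi (ketbra phi) *m e).
  by rewrite -(tr1 phi hf) trb addrC addKr.
have hPa : inner f (Psi (ketbra a) *m f) = 1 - inner e (Psi (ketbra a) *m e).
  by rewrite -(tr1 a ha) trb addrC addKr.
have hdiff : inner e (Psi (ketbra psi) *m e) - inner e (Psi (ketbra phi) *m e) =
    s * (inner e (Psi (ketbra a) *m e) - inner e (Psi (ketbra b) *m e)).
  by rewrite -innerBr -mulmxBl -linB // hD linZ // linB // -innerBr -mulmxBl -innerZr scalemxAl.
have z0 : 0 <= inner f (Psi (ketbra a) *m f) by apply: pos; apply: ketbra_psd.
have y0 : 0 <= inner e (Psi (ketbra b) *m e) by apply: pos; apply: ketbra_psd.
rewrite /success hf2.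
move: hdiff hPa z0 y0.
move: (inner e (Psi (ketbra a) *m e)) (inner e (Psi (ketbra b) *m e)) (inner f (Psi (ketbra a) *m f))
  (inner e (Psi (ketbra psi) *m e)) (inner e (Psi (ketbra phi) *m e)) => x y z u w hdiff hPa z0 y0.
have -> : 2^-1 * u + 2^-1 * (1 - w) = 2^-1 * (1 + (u - w)) by ring.
rewrite hdiff; apply: ler_wpM2l; first by rewrite invr_ge0 ler0n.
rewrite lerD2l; rewrite -[X in _ <= X]mulr1; apply: ler_wpM2l => //.
have -> : x - y = 1 - (z + y) by rewrite hPa; ring.
by rewrite lerBlDr lerDl addr_ge0.
Qed.

Lemma ord2 (i : 'I_2) : i = 0 \/ i = 1.
Proof. by case: i => [[|[|//]] Hi]; [left|right]; apply: val_inj. Qed.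

Definition vec2 {R : realType} (x y : R[i]) : 'cV[R[i]]_2 :=
  \col_(i < 2) (if val i == 0%N then x else y).

Lemma quad2 {R : realType} (S : 'M[R[i]]_2) x y :
  inner (vec2 x y) (S *m vec2 x y) =
  x^* * (S 0 0 * x + S 0 1 * y) + y^* * (S 1 0 * x + S 1 1 * y).
Proof.
rewrite innerE !big_ord_recr !big_ord0 /= !add0r !mxE !big_ord_recr !big_ord0 /= !add0r !mxE /=.
have E0 : widen_ord (leqnSn 1) ord_max = 0 :> 'I_2 by apply: val_inj.
have E1 : ord_max = 1 :> 'I_2 by apply: val_inj.
by rewrite !E0 !E1.
Qed.

Lemma le0_anti {R : realType} (x : R[i]) : 0 <= x -> 0 <= - x -> x = 0.
Proof. by move=> h1; rewrite oppr_ge0 => h2; apply: le_anti; rewrite h1 h2. Qed.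

Lemma ge0_eq {R : realType} (x y : R[i]) : 0 <= x -> x = y -> 0 <= y.
Proof. by move=> h <-. Qed.

Lemma conjN1 {R : realType} : (-1 : R[i])^* = -1.
Proof. by rewrite rmorphN1. Qed.

Lemma conjNi {R : realType} : (- 'i : R[i])^* = 'i.
Proof. by rewrite rmorphN /= conjCi opprK. Qed.

Lemma psd0 {R : realType} (S : 'M[R[i]]_2) : psd S -> \tr S = 0 -> S = 0.
Proof.
move=> hS htr.
have q x y : 0 <= x^* * (S 0 0 * x + S 0 1 * y) + y^* * (S 1 0 * x + S 1 1 * y).
  by rewrite -quad2.
have d0 : 0 <= S 0 0 by apply: (ge0_eq (q 1 0)); rewrite conjC1 conjC0; ring.
have d1 : 0 <= S 1 1 by apply: (ge0_eq (q 0 1)); rewrite conjC1 conjC0; ring.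
have htr' : S 0 0 + S 1 1 = 0.
  by rewrite -htr /mxtrace !big_ord_recr big_ord0 /= add0r; congr (S _ _ + S _ _); apply: val_inj.
move/eqP: htr'; rewrite paddr_eq0 // => /andP[/eqP z0 /eqP z1].
have gen t : 0 <= S 0 1 * t + t^* * S 1 0.
  by apply: (ge0_eq (q 1 t)); rewrite z0 z1 conjC1; ring.
have h1 : S 0 1 + S 1 0 = 0.
  apply: le0_anti; first by apply: (ge0_eq (gen 1)); rewrite conjC1; ring.
  by apply: (ge0_eq (gen (-1))); rewrite conjN1; ring.
have h2 : 'i * (S 0 1 - S 1 0) = 0.
  apply: le0_anti; first by apply: (ge0_eq (gen 'i)); rewrite conjCi; ring.
  by apply: (ge0_eq (gen (- 'i))); rewrite conjNi; ring.
have h3 : S 0 1 = S 1 0.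
  by apply/eqP; rewrite -subr_eq0; move/eqP: h2; rewrite mulf_eq0 (negPf (neq0Ci _)).
have h4 : S 0 1 = 0.
  apply/eqP; move/eqP: h1; rewrite -h3 -mulr2n -mulr_natr mulf_eq0 pnatr_eq0 orbF //.
apply/matrixP => i j; rewrite mxE.
by case: (ord2 i) => ->; case: (ord2 j) => ->; rewrite // -h3.
Qed.

Definition Psi0 {R : realType} (a b e f : 'cV[R[i]]_2) (A : 'M[R[i]]_2) : 'M[R[i]]_2 :=
  inner a (A *m a) *: ketbra e + inner b (A *m b) *: ketbra f.

Lemma Psi0_uv {R : realType} (a b e f u w : 'cV[R[i]]_2) A :
  inner u (Psi0 a b e f A *m w) =
  inner a (A *m a) * (inner u e * inner e w) + inner b (A *m b) * (inner u f * inner f w).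
Proof. by rewrite /Psi0 mulmxDl -!scalemxAl innerDr !innerZr !inner_ketbra. Qed.

Lemma Psi0_e {R : realType} (a b e f : 'cV[R[i]]_2) A :
  inner e e = 1 -> inner e f = 0 -> inner e (Psi0 a b e f A *m e) = inner a (A *m a).
Proof.
move=> he hef; have hfe : inner f e = 0 by rewrite inner_conj hef conjC0.
by rewrite Psi0_uv he hef hfe; ring.
Qed.

Lemma Psi0_f {R : realType} (a b e f : 'cV[R[i]]_2) A :
  inner f f = 1 -> inner e f = 0 -> inner f (Psi0 a b e f A *m f) = inner b (A *m b).
Proof.
move=> hf hef; have hfe : inner f e = 0 by rewrite inner_conj hef conjC0.
by rewrite Psi0_uv hf hef hfe; ring.
Qed.

Lemma Psi0_success {R : realType} (psi phi a b e f : 'cV[R[i]]_2) (s : R[i]) :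
  inner psi psi = 1 -> inner phi phi = 1 ->
  inner a a = 1 -> inner b b = 1 -> inner a b = 0 ->
  inner e e = 1 -> inner f f = 1 -> inner e f = 0 ->
  ketbra psi - ketbra phi = s *: (ketbra a - ketbra b) ->
  success psi phi e f (Psi0 a b e f) = 2^-1 * (1 + s).
Proof.
move=> hp hf ha hb hab he hf' hef hD.
rewrite /success Psi0_e // Psi0_f //.
have hba : inner b a = 0 by rewrite inner_conj hab conjC0.
have -> : inner b (ketbra phi *m b) = 1 - inner a (ketbra phi *m a).
  have t := trace_basis (ketbra phi) ha hb hab; rewrite tr_outer hf in t.
  by rewrite t addrC addKr.
have hdiff : inner a (ketbra psi *m a) - inner a (ketbra phi *m a) = s.
  by rewrite -innerBr -mulmxBl hD -scalemxAl innerZr mulmxBl innerBr !inner_ketbra ha hab hba; ring.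
move: hdiff; move: (inner a (ketbra psi *m a)) (inner a (ketbra phi *m a)) => x y <-; ring.
Qed.

Lemma Psi0_linear {R : realType} (a b e f : 'cV[R[i]]_2) : is_linear_map (Psi0 a b e f).
Proof.
move=> k X Y; rewrite /Psi0 !mulmxDl -!scalemxAl !innerDr !innerZr.
by apply/matrixP => i j; rewrite !mxE; ring.
Qed.

Lemma Psi0_tp {R : realType} (a b e f : 'cV[R[i]]_2) :
  inner a a = 1 -> inner b b = 1 -> inner a b = 0 ->
  inner e e = 1 -> inner f f = 1 -> trace_preserving (Psi0 a b e f).
Proof.
move=> ha hb hab he hf X; rewrite /Psi0 mxtraceD !mxtraceZ /ketbra !tr_outer he hf !mulr1.
by rewrite (trace_basis X ha hb hab).
Qed.

Lemma Psi0_unital {R : realType} (a b e f : 'cV[R[i]]_2) :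
  inner a a = 1 -> inner b b = 1 ->
  inner e e = 1 -> inner f f = 1 -> inner e f = 0 -> is_unital (Psi0 a b e f).
Proof.
move=> ha hb he hf hef; rewrite /is_unital /Psi0 !mul1mx ha hb !scale1r.
exact: complete.
Qed.

Lemma sum2 {V : nmodType} (F : 'I_2 -> V) : \sum_(k < 2) F k = F ord0 + F ord_max.
Proof. by rewrite big_ord_recr big_ord1; congr (F _ + F _); apply: val_inj. Qed.

Lemma outer2 {R : realType} (x y z w : 'cV[R[i]]_2) :
  x *m adj y *m (z *m adj w) = inner y z *: (x *m adj w).
Proof. by rewrite mulmxA -[x *m adj y *m z]mulmxA adj_mul_inner mul_mx_scalar scalemxAl. Qed.

Lemma outer4' {R : realType} (x y z w : 'cV[R[i]]_2) (A : 'M[R[i]]_2) :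
  x *m adj y *m A *m (z *m adj w) = inner y (A *m z) *: (x *m adj w).
Proof. by rewrite mulmxA outer4. Qed.

Lemma Psi0_CP {R : realType} (a b e f : 'cV[R[i]]_2) : completely_positive (Psi0 a b e f).
Proof.
move=> n B hB v; rewrite /ampl.
have -> : \sum_(i < n) \sum_(j < n) inner (v i) (Psi0 a b e f (B i j) *m v j) =
  \sum_(i < n) \sum_(j < n) inner (inner e (v i) *: a) (B i j *m (inner e (v j) *: a)) +
  \sum_(i < n) \sum_(j < n) inner (inner f (v i) *: b) (B i j *m (inner f (v j) *: b)).
  rewrite -big_split; apply: eq_bigr => i _; rewrite -big_split; apply: eq_bigr => j _.
  rewrite Psi0_uv -!scalemxAr !innerZl !innerZr (inner_conj (v i) e) (inner_conj (v i) f) !conjCK.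
  rewrite /=; ring.
by rewrite addr_ge0 //; apply: hB.
Qed.

Lemma Psi0_channel {R : realType} (a b e f : 'cV[R[i]]_2) :
  inner a a = 1 -> inner b b = 1 -> inner a b = 0 ->
  inner e e = 1 -> inner f f = 1 -> is_channel (Psi0 a b e f).
Proof.
move=> ha hb hab he hf; split; [exact: Psi0_linear | exact: Psi0_CP | exact: Psi0_tp].
Qed.

Definition st {R : realType} (e : 'cV[R[i]]_2) (p : R[i]) (S : 'M[R[i]]_2) :=
  if p == 0 then ketbra e else p^-1 *: S.

Lemma ketbra_state {R : realType} (e : 'cV[R[i]]_2) : inner e e = 1 -> is_state (ketbra e).
Proof. by move=> he; split; [exact: ketbra_psd | rewrite tr_outer]. Qed.

Lemma st_state {R : realType} (e : 'cV[R[i]]_2) p S :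
  inner e e = 1 -> psd S -> \tr S = p -> 0 <= p -> is_state (st e p S).
Proof.
move=> he hS htr hp; rewrite /st; case: eqP => [_|p0]; first exact: ketbra_state.
split.
  by move=> w; rewrite -scalemxAl innerZr mulr_ge0 // invr_ge0.
by rewrite mxtraceZ htr mulVf //; apply/eqP.
Qed.

Lemma st_coef {R : realType} (e : 'cV[R[i]]_2) p S i j :
  psd S -> \tr S = p -> p * st e p S i j = S i j.
Proof.
move=> hS htr; rewrite /st; case: eqP => [p0|p0].
  by rewrite p0 mul0r (psd0 hS) ?mxE // htr p0.
by rewrite mxE mulVKf //; apply/eqP.
Qed.

Lemma Psi0_EB {R : realType} (a b e f : 'cV[R[i]]_2) :
  inner a a = 1 -> inner b b = 1 -> inner a b = 0 ->
  inner e e = 1 -> inner f f = 1 -> inner e f = 0 ->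
  is_entanglement_breaking (Psi0 a b e f).
Proof.
move=> ha hb hab he hf hef; split; first exact: Psi0_channel.
move=> B [hB htr].
pose SS (c : 'cV[R[i]]_2) : 'M[R[i]]_2 := \matrix_(i, j) inner c (B i j *m c).
have psdS c : psd (SS c).
  move=> w; apply: (ge0_eq (hB (fun i => w i 0 *: c))).
  rewrite [RHS]innerE; apply: eq_bigr => i _; rewrite mxE mulr_sumr; apply: eq_bigr => j _.
  by rewrite !mxE -scalemxAr innerZl innerZr; ring.
have trS c : \tr (SS c) = \sum_(i < 2) inner c (B i i *m c).
  by rewrite /mxtrace; apply: eq_bigr => i _; rewrite mxE.
have p_ge0 c : 0 <= \tr (SS c) by rewrite (trace_basis _ he hf hef) addr_ge0 //; apply: psdS.
pose p (k : 'I_2) := if val k == 0%N then \tr (SS a) else \tr (SS b).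
pose s (k : 'I_2) := if val k == 0%N then st e (\tr (SS a)) (SS a) else st e (\tr (SS b)) (SS b).
pose t (k : 'I_2) := if val k == 0%N then ketbra e else ketbra f.
exists 2, p, s, t; split.
- by move=> k; rewrite /p; case: ifP.
- rewrite sum2 /p /= !trS -big_split -htr /=; apply: eq_bigr => i _.
  by rewrite (trace_basis (B i i) ha hb hab).
- by move=> k; rewrite /s; case: ifP => _; apply: st_state.
- by move=> k; rewrite /t; case: ifP => _; apply: ketbra_state.
move=> i j; rewrite sum2 /p /s /t /= /ampl /Psi0 !st_coef //.
by rewrite !mxE.
Qed.

Lemma Psi0_RU {R : realType} (a b e f : 'cV[R[i]]_2) :
  inner a a = 1 -> inner b b = 1 -> inner a b = 0 ->
  inner e e = 1 -> inner f f = 1 -> inner e f = 0 ->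
  is_random_unitary (Psi0 a b e f).
Proof.
move=> ha hb hab he hf hef.
have hba : inner b a = 0 by rewrite inner_conj hab conjC0.
pose U0 := e *m adj a + f *m adj b.
pose U1 := e *m adj a - f *m adj b.
have aU0 : adj U0 = a *m adj e + b *m adj f by rewrite /U0 hadjD !hadjM !hadjK.
have aU1 : adj U1 = a *m adj e - b *m adj f by rewrite /U1 hadjD hadjN !hadjM !hadjK.
pose U (k : 'I_2) := if val k == 0%N then U0 else U1.
have h2 : (2 : R[i]) != 0 by rewrite pnatr_eq0.
exists 2, (fun _ => 2^-1), U; split.
- by move=> k; rewrite invr_ge0 ler0n.
- by rewrite sum2; field.
- move=> k; rewrite /U /unitary; case: ifP => _.
    rewrite aU0 /U0 mulmxDl !mulmxDr !outer2 ha hb hab hba !scale0r !scale1r addr0 add0r.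
    exact: complete.
  rewrite aU1 /U1 mulmxBl !mulmxBr !outer2 ha hb hab hba !scale0r !scale1r subr0 sub0r opprK.
  exact: complete.
move=> A; rewrite sum2 /U /= aU0 aU1 /U0 /U1.
rewrite !mulmxDl !mulmxDr ?mulNmx ?mulmxN !outer4' /Psi0 /ketbra.
apply/matrixP => i j; rewrite !mxE.
by field.
Qed.

Lemma inner0r {R : realType} (x : 'cV[R[i]]_2) : inner x 0 = 0.
Proof. by rewrite /inner mulmx0 mxE. Qed.

Lemma inner_sum {R : realType} (x : 'cV[R[i]]_2) K (F : 'I_K -> 'cV[R[i]]_2) :
  inner x (\sum_(k < K) F k) = \sum_(k < K) inner x (F k).
Proof. exact: (big_morph (inner x) (innerDr x) (inner0r x)). Qed.

Lemma cp_pos {R : realType} (Psi : 'M[R[i]]_2 -> 'M[R[i]]_2) :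
  completely_positive Psi -> forall A, psd A -> psd (Psi A).
Proof.
move=> cp A hA w.
have := cp 1 (fun _ _ => A) _ (fun _ => w); rewrite /ampl !big_ord1; apply.
by move=> u; rewrite !big_ord1; apply: hA.
Qed.

Lemma RU_props {R : realType} (Psi : 'M[R[i]]_2 -> 'M[R[i]]_2) :
  is_random_unitary Psi ->
  [/\ is_linear_map Psi, forall A, psd A -> psd (Psi A) & trace_preserving Psi].
Proof.
move=> [K [p [U [hp hs hU hPsi]]]]; split.
- move=> k X Y; rewrite !hPsi scaler_sumr -big_split; apply: eq_bigr => j _ /=.
  by rewrite mulmxDr mulmxDl -scalemxAr -scalemxAl scalerDr !scalerA mulrC.
- move=> A hA w; rewrite hPsi mulmx_suml inner_sum; apply: sumr_ge0 => k _.
  rewrite -scalemxAl innerZr mulr_ge0 //.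
  by rewrite -!mulmxA inner_mulmx; apply: hA.
- move=> X; rewrite hPsi raddf_sum.
  have -> : \sum_(k < K) \tr (p k *: (U k *m X *m adj (U k))) = \sum_(k < K) p k * \tr X.
    apply: eq_bigr => k _; rewrite mxtraceZ mxtrace_mulC mulmxA (mulmx1C (hU k)) mul1mx.
    done.
  by rewrite -mulr_suml hs mul1r.
Qed.

Unset Implicit Arguments.


Theorem proposition10 (R : realType) (psi phi e f : 'cV[R[i]]_2)
  (hpsi : unit_vector psi) (hphi : unit_vector phi)
  (he : unit_vector e) (hf : unit_vector f) (hef : inner e f = 0)
  (X : ('M[R[i]]_2 -> 'M[R[i]]_2) -> Prop)
  (hX : X = @is_random_unitary R \/ X = @is_unital_entanglement_breaking R \/
        X = @is_entanglement_breaking R \/ X = @is_channel R) :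
  let v := 2^-1 * (1 + sqrtc (1 - `|inner psi phi| ^+ 2)) in
  (exists Psi, X Psi /\ success psi phi e f Psi = v) /\
  (forall Psi, X Psi -> success psi phi e f Psi <= v).
Proof.
move=> v.
rewrite /unit_vector in hpsi hphi he hf.
have [a [b [ha hb hab hD]]] := spectral hpsi hphi he hf hef.
split.
  exists (Psi0 a b e f); split; last exact: Psi0_success hD.
  case: hX => [->|[->|[->|->]]].
  - exact: Psi0_RU.
  - by split; [exact: Psi0_EB | exact: Psi0_unital].
  - exact: Psi0_EB.
  - exact: Psi0_channel.
have hch Psi : is_channel Psi -> success psi phi e f Psi <= v.
  by case=> lin cp tp; apply: upper => //; apply: cp_pos.
move=> Psi; case: hX => [->|[->|[->|->]]].
- by case/RU_props=> lin pos tp; apply: upper.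
- by case=> [[hc _] _]; apply: hch.
- by case=> hc _; apply: hch.
- exact: hch.
Qed.
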